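(* There is an absolute constant $c>0$ such that the following holds. Let $N\ge1$, $M\ge4$ be integers, let $M'=2^n$ be the largest power of two with $M'(\log M'+2)\le M/2$ and assume $N\ge M'$. Let $b\le N$ be a positive integer multiple of $M'$ and let $k\in\mathbb N$. Then there is a 2D SLP $\mathcal G$ with at most $c\cdot(\log N+\log M+k)$ nonterminals such that for every $i\in[0..k]$, $\mathcal G$ contains a nonterminal $C_i$ with $\exp(C_i)=C_{N+i\cdot b,\,M}$.
   Context: Alphabet $\Sigma\supseteq\{0,1,\$\}$; logarithms are base 2. For $N=2^n$, $\mathsf{Bin}_N$ is the $N\times(n+2)$ array whose $i$-th row is $\$\,b_{i-1}\,\$$ with $b_{i-1}$ the $n$-bit binary representation of $i-1$; $\mathsf{ShiftBin}_N$ is the $2N\times N(n+2)$ array in which, for each $j\in[1..N]$, rows $j..j+N-1$ and columns $(j-1)(n+2)+1..j(n+2)$ form a copy of $\mathsf{Bin}_N$, all other entries being $0$. For integers $N\ge1$, $M\ge4$, let $M'=2^{n}$ be the largest power of two with $M'(\log M'+2)\le M/2$, assume $N\ge M'$, and let $B=\mathsf{ShiftBin}_{M'}$ (of size $2M'\times M'(\log M'+2)$). The 2D string $C_{N,M}$ of size $N\times M$ is the horizontal concatenation of three parts: (1) the left block, of width $M'(\log M'+2)$: $\lfloor N/(2M')\rfloor$ copies of $B$ stacked vertically, followed below by rows of $0$'s to reach height $N$; (2) the right block, of the same width: $M'$ rows of $0$'s, then $\lfloor (N-M')/(2M')\rfloor$ copies of $B$ stacked vertically, then rows of $0$'s to reach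 height $N$; (3) an all-$0$ block completing the width to $M$. A 2D SLP is a triple $(\mathcal V,\mathcal S,\rho)$ of nonterminals with dimensions, a start, and productions each being a character, a horizontal concatenation of two nonterminals of equal height, or a vertical concatenation of two nonterminals of equal width, with acyclic occurrence relation; $\exp(X)$ denotes the recursive expansion of $X$. *)

(* Defs.v *)
From Stdlib Require Import Reals.
From mathcomp Require Import all_boot.

Set Implicit Arguments.
Unset Strict Implicit.
Unset Printing Implicit Defensive.

(** * 2D strings: a 2D string is represented as the list of its rows. *)
Definition str2 (S : Type) := seq (seq S).

Definition height {S} (s : str2 S) : nat := size s.
Definition width {S} (s : str2 S) : nat := size (head [::] s).

(** Nonterminals are numbered 0 .. size g - 1; the production of nonterminal i
    is the i-th rule.  Acyclicity of the occurrence relation is expressed by a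
    topological numbering: the right-hand side of rule i only mentions
    nonterminals j < i. *)
Inductive rule (S : Type) :=
| Term of S
| HCat of nat & nat
| VCat of nat & nat.
Arguments HCat {S}.
Arguments VCat {S}.

Definition slp (S : Type) := seq (rule S).

Definition hcat {S} (x y : str2 S) : str2 S := [seq p.1 ++ p.2 | p <- zip x y].
Definition vcat {S} (x y : str2 S) : str2 S := x ++ y.

Definition expand_rule {S} (acc : seq (str2 S)) (r : rule S) : str2 S :=
  match r with
  | Term a => [:: [:: a]]
  | HCat x y => hcat (nth [::] acc x) (nth [::] acc y)
  | VCat x y => vcat (nth [::] acc x) (nth [::] acc y)
  end.

Definition exps {S} (g : slp S) : seq (str2 S) :=
  foldl (fun acc r => rcons acc (expand_rule acc r)) [::] g.

Definition expNT {S} (g : slp S) (i : nat) : str2 S := nth [::] (exps g) i.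

Definition rule_ok {S} (g : slp S) (i : nat) (r : rule S) : Prop :=
  match r with
  | Term _ => True
  | HCat x y => [/\ x < i, y < i & height (expNT g x) = height (expNT g y)]
  | VCat x y => [/\ x < i, y < i & width (expNT g x) = width (expNT g y)]
  end%N.

Definition slp_wf {S} (g : slp S) : Prop :=
  forall i, (i < size g)%N -> rule_ok g i (nth (HCat 0 0) g i).

Definition slp_size {S} (g : slp S) : nat := size g.

(** * The 2D strings Bin, ShiftBin and C_{N,M}  (0-based indices). *)
Section Strings.
Variables (S : Type) (c0 c1 cd : S). (* the characters 0, 1, $ *)

(* bit j (0 = most significant) of the n-bit binary representation of v *)
Definition bitc (n v j : nat) : S := if odd (v %/ 2 ^ (n.-1 - j)) then c1 else c0.

(* entry (r, c) of Bin_{2^n}, r < 2^n, c < n+2: row r is $ b_r $ *)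
Definition bin_entry (n r c : nat) : S :=
  if (c == 0) || (c == n.+1) then cd else bitc n r (c.-1).

(* entry (r, c) of ShiftBin_{2^n} (2*2^n rows, 2^n (n+2) columns) *)
Definition shiftbin_entry (n r c : nat) : S :=
  let j0 := c %/ (n + 2) in
  if (j0 <= r) && (r < j0 + 2 ^ n) then bin_entry n (r - j0) (c %% (n + 2)) else c0.

(* n with M' = 2^n: the largest n with M' (log M' + 2) <= M/2,
   i.e. 2 * 2^n * (n+2) <= M (any such n is < M). *)
Definition logMp (M : nat) : nat :=
  foldl (fun acc n => if 2 * 2 ^ n * (n + 2) <= M then n else acc) 0 (iota 0 M).
(* = the largest n < M with 2 * 2^n * (n+2) <= M (0 if none; n = 0 works
   whenever M >= 4) *)

Definition C_entry (N M r c : nat) : S :=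
  let n := logMp M in
  let Mp := 2 ^ n in
  let W := Mp * (n + 2) in
  if c < W then
    (if r %/ (2 * Mp) < N %/ (2 * Mp) then shiftbin_entry n (r %% (2 * Mp)) c else c0)
  else if c < 2 * W then
    (if r < Mp then c0
     else if (r - Mp) %/ (2 * Mp) < (N - Mp) %/ (2 * Mp)
          then shiftbin_entry n ((r - Mp) %% (2 * Mp)) (c - W) else c0)
  else c0.

Definition Cstr (N M : nat) : str2 S :=
  mkseq (fun r => mkseq (fun c => C_entry N M r c) M) N.
End Strings.

Definition log2R (x : nat) : R := Rdiv (ln (INR x)) (ln (INR 2)).

(* Main.v *)
Require Import Defs.
From Stdlib Require Import Reals Lra.
From mathcomp Require Import all_boot.
From mathcomp Require Import zify.

Set Implicit Arguments.
Unset Strict Implicit.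
Unset Printing Implicit Defensive.

Section SLP.
Variable S : Type.
Variables c0 c1 cd : S.

Definition FF (acc : seq (str2 S)) (r : rule S) := rcons acc (expand_rule acc r).

Lemma foldl_pref (s : seq (rule S)) acc : exists t, foldl FF acc s = acc ++ t.
Proof.
elim: s acc => [|r s IH] acc /=; first by exists [::]; rewrite cats0.
have [t ->] := IH (FF acc r); exists (expand_rule acc r :: t).
by rewrite /FF cat_rcons.
Qed.

Lemma size_foldl (s : seq (rule S)) acc : size (foldl FF acc s) = size acc + size s.
Proof.
elim: s acc => [|r s IH] acc /=; first by rewrite addn0.
by rewrite IH /FF size_rcons addSnnS.
Qed.

Lemma exps_FF (g : slp S) : exps g = foldl FF [::] g.
Proof. by []. Qed.

Lemma expNT_cat (g s : slp S) j : j < size g -> expNT (g ++ s) j = expNT g j.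
Proof.
move=> lt; rewrite /expNT !exps_FF foldl_cat.
have [t ->] := foldl_pref s (foldl FF [::] g).
by rewrite nth_cat size_foldl /= lt.
Qed.

Lemma expNT_last (g : slp S) r : expNT (rcons g r) (size g) = expand_rule (exps g) r.
Proof.
by rewrite /expNT !exps_FF foldl_rcons /FF nth_rcons size_foldl /= ltnn eqxx.
Qed.

Lemma rule_ok_cat (g s : slp S) i r : i <= size g -> rule_ok g i r -> rule_ok (g ++ s) i r.
Proof.
move=> le; case: r => [a|x y|x y] //= [xi yi e]; split => //;
by rewrite !expNT_cat // (leq_trans _ le).
Qed.

Lemma wf_rcons (g : slp S) r : slp_wf g -> rule_ok (rcons g r) (size g) r -> slp_wf (rcons g r).
Proof.
move=> wf ok i; rewrite size_rcons ltnS leq_eqVlt => /orP[/eqP->|lt].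
  by rewrite nth_rcons ltnn eqxx.
rewrite nth_rcons lt -cats1; apply: rule_ok_cat; first exact: ltnW.
exact: wf.
Qed.

Definition mat h w (f : nat -> nat -> S) : str2 S :=
  mkseq (fun r => mkseq (fun c => f r c) w) h.

Definition hfun w1 (f1 f2 : nat -> nat -> S) r c := if c < w1 then f1 r c else f2 r (c - w1).
Definition vfun h1 (f1 f2 : nat -> nat -> S) r c := if r < h1 then f1 r c else f2 (r - h1) c.

Lemma mkseq_cat T (f1 f2 : nat -> T) w1 w2 :
  mkseq f1 w1 ++ mkseq f2 w2 = mkseq (fun c => if c < w1 then f1 c else f2 (c - w1)) (w1 + w2).
Proof.
rewrite /mkseq iotaD map_cat add0n; congr (_ ++ _).
  by apply/eq_in_map => i; rewrite mem_iota add0n => /andP[_ ->].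
rewrite -(addn0 w1) iotaDl addn0 -map_comp; apply: eq_map => i /=.
by rewrite ltnNge leq_addr /= addKn.
Qed.

Lemma mat_ext h w f f' : (forall r c, r < h -> c < w -> f r c = f' r c) -> mat h w f = mat h w f'.
Proof.
move=> E; rewrite /mat /mkseq; apply/eq_in_map => r; rewrite mem_iota add0n => /andP[_ rh].
by rewrite -/(mkseq _ w) -/(mkseq _ w) /mkseq; apply/eq_in_map => c; rewrite mem_iota add0n => /andP[_ cw]; apply: E.
Qed.

Lemma height_mat h w f : height (mat h w f) = h.
Proof. by rewrite /height size_mkseq. Qed.

Lemma width_mat h w f : 0 < h -> width (mat h w f) = w.
Proof. by case: h => // h _; rewrite /width /= size_mkseq. Qed.

Lemma vcat_mat h1 h2 w f1 f2 : vcat (mat h1 w f1) (mat h2 w f2) = mat (h1 + h2) w (vfun h1 f1 f2).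
Proof.
rewrite /vcat /mat mkseq_cat /mkseq; apply/eq_in_map => r _ /=.
by rewrite /vfun; case: ifP.
Qed.

Lemma hcat_mat h w1 w2 f1 f2 : hcat (mat h w1 f1) (mat h w2 f2) = mat h (w1 + w2) (hfun w1 f1 f2).
Proof.
rewrite /hcat /mat /mkseq zip_map -map_comp; apply: eq_map => r /=.
by rewrite -/(mkseq _ w1) -/(mkseq _ w2) mkseq_cat.
Qed.

Definition gen (g : slp S) j h w f := [/\ j < size g, 0 < h, 0 < w & expNT g j = mat h w f].
Definition gen0 (g : slp S) j h w f := (h = 0 \/ w = 0) \/ gen g j h w f.

Lemma gen_cat g s j h w f : gen g j h w f -> gen (g ++ s) j h w f.
Proof.
by case=> lt h0 w0 e; split => //; [rewrite size_cat ltn_addr | rewrite expNT_cat].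
Qed.

Lemma gen0_cat g s j h w f : gen0 g j h w f -> gen0 (g ++ s) j h w f.
Proof. by case=> [H|H]; [left | right; apply: gen_cat]. Qed.

Lemma gen_fun g j h w f f' : (forall r c, r < h -> c < w -> f r c = f' r c) ->
  gen g j h w f -> gen g j h w f'.
Proof. by move=> E [a b c e]; split => //; rewrite e (mat_ext E). Qed.

Lemma gen0_fun g j h w f f' : (forall r c, r < h -> c < w -> f r c = f' r c) ->
  gen0 g j h w f -> gen0 g j h w f'.
Proof. by move=> E [H|H]; [left | right; apply: gen_fun H]. Qed.

Lemma gen_gen0 g j h w f : gen g j h w f -> gen0 g j h w f.
Proof. by right. Qed.

Lemma gen0_gen g j h w f : 0 < h -> 0 < w -> gen0 g j h w f -> gen g j h w f.
Proof. by move=> hp wp [[E|E]|] //; rewrite E in hp wp. Qed.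

Definition builds (g : slp S) K (P : slp S -> Prop) :=
  exists s, [/\ slp_wf (g ++ s), size s <= K & P (g ++ s)].

Lemma step_term g a : slp_wf g ->
  builds g 1 (fun g' => exists j, gen g' j 1 1 (fun _ _ => a)).
Proof.
move=> wf; exists [:: Term a]; rewrite cats1; split => //.
  exact: wf_rcons.
exists (size g); split => //; first by rewrite size_rcons.
by rewrite expNT_last.
Qed.

Lemma step_hcat g x y h w1 w2 f1 f2 : slp_wf g -> gen g x h w1 f1 -> gen g y h w2 f2 ->
  builds g 1 (fun g' => exists j, gen g' j h (w1 + w2) (hfun w1 f1 f2)).
Proof.
move=> wf [x1 x2 x3 x4] [y1 y2 y3 y4]; exists [:: HCat x y]; rewrite cats1; split => //.
  apply: wf_rcons => //=; rewrite -cats1; split => //; rewrite !expNT_cat //.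
  by rewrite x4 y4 !height_mat.
exists (size g); split => //; first by rewrite size_rcons.
  by rewrite addn_gt0 x3.
by rewrite expNT_last /= -!/(expNT g _) x4 y4 hcat_mat.
Qed.

Lemma step_vcat g x y h1 h2 w f1 f2 : slp_wf g -> gen g x h1 w f1 -> gen g y h2 w f2 ->
  builds g 1 (fun g' => exists j, gen g' j (h1 + h2) w (vfun h1 f1 f2)).
Proof.
move=> wf [x1 x2 x3 x4] [y1 y2 y3 y4]; exists [:: VCat x y]; rewrite cats1; split => //.
  apply: wf_rcons => //=; rewrite -cats1; split => //; rewrite !expNT_cat //.
  by rewrite x4 y4 !width_mat.
exists (size g); split => //; first by rewrite size_rcons.
  by rewrite addn_gt0 x2.
by rewrite expNT_last /= -!/(expNT g _) x4 y4 vcat_mat.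
Qed.


Lemma builds_ret g P : slp_wf g -> P g -> builds g 0 P.
Proof. by move=> wf HP; exists [::]; rewrite cats0. Qed.

Ltac lift := solve [ assumption | apply: gen_cat; lift | apply: gen0_cat; lift ].

Lemma builds_retK g K P : slp_wf g -> P g -> builds g K P.
Proof. by move=> wf HP; exists [::]; rewrite cats0. Qed.

Lemma builds_mono g K K' P : K <= K' -> builds g K P -> builds g K' P.
Proof. by move=> le [s [a b c]]; exists s; split => //; apply: leq_trans le. Qed.

Lemma builds_bind g K K' P Q : builds g K P ->
  (forall s, slp_wf (g ++ s) -> P (g ++ s) -> builds (g ++ s) K' Q) -> builds g (K + K') Q.
Proof.
move=> [s [w1 z1 p1]] C; have [s' [w2 z2 q2]] := C s w1 p1.
exists (s ++ s'); rewrite catA; split => //.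
by rewrite size_cat leq_add.
Qed.

Lemma builds_wk g K P Q : (forall s, P (g ++ s) -> Q (g ++ s)) -> builds g K P -> builds g K Q.
Proof. by move=> H [s [a b c]]; exists s; split => //; apply: H. Qed.

Lemma step_hcat0 g x y h w1 w2 f1 f2 : slp_wf g -> gen0 g x h w1 f1 -> gen0 g y h w2 f2 ->
  builds g 1 (fun g' => exists j, gen0 g' j h (w1 + w2) (hfun w1 f1 f2)).
Proof.
move=> wf [[E|E]|gx].
- move=> _; apply: (builds_retK _ wf); exists 0; by left; left.
- move=> gy; apply: (builds_retK _ wf); exists y; rewrite E add0n.
  by apply: gen0_fun gy => r c _ _; rewrite /hfun subn0.
move=> [[E|E]|gy].
- apply: (builds_retK _ wf); exists 0; by left; left.
- apply: (builds_retK _ wf); exists x; rewrite E addn0.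
  by apply: gen0_fun (gen_gen0 gx) => r c _ cw; rewrite /hfun cw.
apply: builds_wk (step_hcat wf gx gy) => g' [j G]; exists j; exact: gen_gen0.
Qed.

Lemma step_vcat0 g x y h1 h2 w f1 f2 : slp_wf g -> gen0 g x h1 w f1 -> gen0 g y h2 w f2 ->
  builds g 1 (fun g' => exists j, gen0 g' j (h1 + h2) w (vfun h1 f1 f2)).
Proof.
move=> wf [[E|E]|gx].
- move=> gy; apply: (builds_retK _ wf); exists y; rewrite E add0n.
  by apply: gen0_fun gy => r c _ _; rewrite /vfun subn0.
- move=> _; apply: (builds_retK _ wf); exists 0; by left; right.
move=> [[E|E]|gy].
- apply: (builds_retK _ wf); exists x; rewrite E addn0.
  by apply: gen0_fun (gen_gen0 gx) => r c rh _; rewrite /vfun rh.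
- apply: (builds_retK _ wf); exists 0; by left; right.
apply: builds_wk (step_vcat wf gx gy) => g' [j G]; exists j; exact: gen_gen0.
Qed.

Lemma modn_sub r a h : a * h <= r -> (r - a * h) %% h = r %% h.
Proof. by move=> H; rewrite -{2}(subnK H) addnC modnMDl. Qed.

Lemma vrep g x h w f m : slp_wf g -> gen g x h w f -> 0 < m ->
  builds g (2 * trunc_log 2 m) (fun g' => exists j, gen g' j (m * h) w (fun r c => f (r %% h) c)).
Proof.
elim/ltn_ind: m g => m IH g wf gx m0.
have [m1|m2] := leqP m 1.
  have -> : m = 1 by apply/eqP; rewrite eqn_leq m1 m0.
  apply: (builds_retK _ wf); exists x; rewrite mul1n.
  by apply: gen_fun gx => r c rh _; rewrite modn_small.
set m' := m./2.
have Hm := odd_double_half m; rewrite -/m' -addnn in Hm.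
have m'0 : 0 < m' by move: Hm; case: (odd m) => /=; lia.
have m'm : m' < m by lia.
rewrite (trunc_log2S m2) -/m' (mulnS 2) addnC.
apply: (@builds_bind g (2 * trunc_log 2 m') 2 _ _ (IH m' m'm g wf gx m'0)) => s wf1 [j1 G1].
have G1' := G1.
case: G1' => [_ hp wp _].
apply: (@builds_bind _ 1 1 _ _ (step_vcat wf1 G1 G1)) => s2 wf2 [j2 G2].
case: (odd m) Hm => Hm /=.
  have gx2 : gen ((g ++ s) ++ s2) x h w f by apply: gen_cat; apply: gen_cat.
  apply: builds_wk (step_vcat wf2 G2 gx2) => g' [j G]; exists j.
  rewrite -Hm mulnDl mul1n addnC mulnDl.
  apply: gen_fun G => r c rh cw; rewrite /vfun.
  case: ifP => r1.
    case: ifP => r2 //; rewrite modn_sub //; lia.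
  move/negbT: r1; rewrite -leqNgt => r1.
  rewrite -(modn_sub (a := m' + m')) ?mulnDl //.
  rewrite modn_small //; lia.
apply: (builds_retK _ wf2); exists j2.
rewrite -Hm add0n mulnDl.
apply: gen_fun G2 => r c rh cw; rewrite /vfun.
case: ifP => r2 //; rewrite modn_sub //; lia.
Qed.


Lemma hrep g x h w f m : slp_wf g -> gen g x h w f -> 0 < m ->
  builds g (2 * trunc_log 2 m) (fun g' => exists j, gen g' j h (m * w) (fun r c => f r (c %% w))).
Proof.
elim/ltn_ind: m g => m IH g wf gx m0.
have [m1|m2] := leqP m 1.
  have -> : m = 1 by apply/eqP; rewrite eqn_leq m1 m0.
  apply: (builds_retK _ wf); exists x; rewrite mul1n.
  by apply: gen_fun gx => r c _ cw; rewrite modn_small.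
set m' := m./2.
have Hm := odd_double_half m; rewrite -/m' -addnn in Hm.
have m'0 : 0 < m' by move: Hm; case: (odd m) => /=; lia.
have m'm : m' < m by lia.
rewrite (trunc_log2S m2) -/m' (mulnS 2) addnC.
apply: (@builds_bind g (2 * trunc_log 2 m') 2 _ _ (IH m' m'm g wf gx m'0)) => s wf1 [j1 G1].
apply: (@builds_bind _ 1 1 _ _ (step_hcat wf1 G1 G1)) => s2 wf2 [j2 G2].
case: (odd m) Hm => Hm /=.
  have gx2 : gen ((g ++ s) ++ s2) x h w f by apply: gen_cat; apply: gen_cat.
  apply: builds_wk (step_hcat wf2 G2 gx2) => g' [j G]; exists j.
  rewrite -Hm mulnDl mul1n addnC mulnDl.
  apply: gen_fun G => r c rh cw; rewrite /hfun.
  case: ifP => r1.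
    case: ifP => r2 //; rewrite modn_sub //; lia.
  move/negbT: r1; rewrite -leqNgt => r1.
  rewrite -(modn_sub (a := m' + m')) ?mulnDl //.
  rewrite modn_small //; lia.
apply: (builds_retK _ wf2); exists j2.
rewrite -Hm add0n mulnDl.
apply: gen_fun G2 => r c rh cw; rewrite /hfun.
case: ifP => r2 //; rewrite modn_sub //; lia.
Qed.

Lemma const_blk g (a : S) h w : slp_wf g ->
  builds g (1 + 2 * trunc_log 2 w + 2 * trunc_log 2 h)
    (fun g' => exists j, gen0 g' j h w (fun _ _ => a)).
Proof.
move=> wf.
have [h0|hp] := posnP h.
  by apply: (builds_retK _ wf); exists 0; left; left.
have [w0|wp] := posnP w.
  by apply: (builds_retK _ wf); exists 0; left; right.
apply: (@builds_bind _ 1 _ _ _ (step_term a wf)) => s wf1 [j1 G1].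
apply: (@builds_bind _ _ _ _ _ (hrep wf1 G1 wp)) => s2 wf2 [j2 G2].
apply: builds_wk (vrep wf2 G2 hp) => g' [j G]; exists j; right.
by rewrite !muln1 in G; apply: gen_fun G.
Qed.


Lemma gen_const_v g j h w h1 (a : S) :
  gen g j h w (vfun h1 (fun _ _ => a) (fun _ _ => a)) -> gen g j h w (fun _ _ => a).
Proof. by apply: gen_fun => r c _ _; rewrite /vfun; case: ifP. Qed.

Lemma odd_div_mod r m e : e < m -> odd (r %/ 2 ^ e) = odd ((r %% 2 ^ m) %/ 2 ^ e).
Proof.
move=> em; rewrite {1}(divn_eq r (2 ^ m)).
have -> : 2 ^ m = 2 ^ (m - e) * 2 ^ e by rewrite -expnD subnK // ltnW.
rewrite mulnA divnMDl ?expn_gt0 // oddD oddM oddX.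
have -> : (m - e == 0) = false by apply/negbTE; rewrite -lt0n subn_gt0.
by rewrite andbF.
Qed.

Lemma bin_first m r : r < 2 ^ m.+1 ->
  bin_entry c0 c1 cd m.+1 r 1 = if r < 2 ^ m then c0 else c1.
Proof.
move=> rlt; rewrite /bin_entry /= /bitc /= subn0.
have [lt|ge] := ltnP r (2 ^ m).
  by rewrite divn_small.
have -> : r %/ 2 ^ m = 1.
  apply/eqP; rewrite eqn_leq -ltnS ltn_divLR ?expn_gt0 // -expnS rlt /=.
  by rewrite divn_gt0 ?expn_gt0.
by [].
Qed.

Lemma bin_rest m r c : c < m.+1 ->
  bin_entry c0 c1 cd m.+1 r c.+2 = bin_entry c0 c1 cd m (r %% 2 ^ m) c.+1.
Proof.
move=> cm; rewrite /bin_entry /= eqSS.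
case: eqP => // /eqP cne; rewrite /bitc /=.
have cm' : c < m by rewrite ltn_neqAle cne -ltnS.
rewrite (odd_div_mod r (m := m)); last by lia.
by have -> : m.-1 - c = m - c.+1 by lia.
Qed.

Lemma build_D g m : slp_wf g ->
  builds g (6 * m + 3) (fun g' => exists j0 j1 jd jD,
    [/\ gen g' j0 (2 ^ m) 1 (fun _ _ => c0), gen g' j1 (2 ^ m) 1 (fun _ _ => c1),
        gen g' jd (2 ^ m) 1 (fun _ _ => cd) &
        gen g' jD (2 ^ m) m.+1 (fun r c => bin_entry c0 c1 cd m r c.+1)]).
Proof.
move=> wf; elim: m => [|m IH].
  apply: (@builds_bind _ 1 2 _ _ (step_term c0 wf)) => s wf1 [j0 G0].
  apply: (@builds_bind _ 1 1 _ _ (step_term c1 wf1)) => s2 wf2 [j1 G1].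
  apply: builds_wk (step_term cd wf2) => g' [jd Gd].
  exists j0, j1, jd, jd; split; rewrite ?expn0; try by lift.
have -> : 6 * m.+1 + 3 = (6 * m + 3) + (1 + (1 + (1 + (1 + (1 + 1))))) by lia.
apply: (builds_bind IH) => s wf1 [j0 [j1 [jd [jD [G0 G1 Gd GD]]]]].
apply: (builds_bind (step_vcat wf1 G0 G0)) => s2 wf2 [k0 K0].
have G1' : gen ((g ++ s) ++ s2) j1 (2 ^ m) 1 (fun=> (fun=> c1)) by lift.
apply: (builds_bind (step_vcat wf2 G1' G1')) => s3 wf3 [k1 K1].
have Gd' : gen (((g ++ s) ++ s2) ++ s3) jd (2 ^ m) 1 (fun=> (fun=> cd)) by lift.
apply: (builds_bind (step_vcat wf3 Gd' Gd')) => s4 wf4 [kd Kd].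
have G0' : gen ((((g ++ s) ++ s2) ++ s3) ++ s4) j0 (2 ^ m) 1 (fun=> (fun=> c0)) by lift.
have G1'' : gen ((((g ++ s) ++ s2) ++ s3) ++ s4) j1 (2 ^ m) 1 (fun=> (fun=> c1)) by lift.
apply: (builds_bind (step_vcat wf4 G0' G1'')) => s5 wf5 [kc KC].
have GD' : gen (((((g ++ s) ++ s2) ++ s3) ++ s4) ++ s5) jD (2 ^ m) m.+1
   (fun r c : nat => bin_entry c0 c1 cd m r c.+1) by lift.
apply: (builds_bind (step_vcat wf5 GD' GD')) => s6 wf6 [kD KD].
have KC' : gen ((((((g ++ s) ++ s2) ++ s3) ++ s4) ++ s5) ++ s6) kc (2 ^ m + 2 ^ m) 1
   (vfun (2 ^ m) (fun=> (fun=> c0)) (fun=> (fun=> c1))) by lift.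
apply: builds_wk (step_hcat wf6 KC' KD) => s7 [kE KE].
have e2 : 2 ^ m.+1 = 2 ^ m + 2 ^ m by rewrite expnS mul2n addnn.
exists k0, k1, kd, kE; rewrite e2; split; try (apply: (gen_const_v (h1 := 2 ^ m)); lift).
rewrite add1n in KE.
apply: gen_fun KE => r c rlt clt.
rewrite /hfun /vfun; case: ifP => c0'.
  have -> : c = 0 by lia.
  by rewrite bin_first ?e2.
case: c clt c0' => // c clt _; rewrite bin_rest // subSS subn0.
case: ifP => rm //; first by rewrite modn_small.
move/negbT: rm; rewrite -leqNgt => rm.
rewrite -(modn_sub (a := 1)) ?mul1n // modn_small //; lia.
Qed.



Lemma gen_hw g j h w f h' w' : gen g j h w f -> h = h' -> w = w' -> gen g j h' w' f.
Proof. by move=> G <- <-. Qed.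

Lemma gen0_hw g j h w f h' w' : gen0 g j h w f -> h = h' -> w = w' -> gen0 g j h' w' f.
Proof. by move=> G <- <-. Qed.

Lemma gen_cst g j h w f (a : S) : gen g j h w f -> (forall r c, f r c = a) ->
  gen g j h w (fun _ _ => a).
Proof. by move=> G E; apply: gen_fun G => r c _ _; rewrite E. Qed.

Notation SB := (shiftbin_entry c0 c1 cd).

Lemma sb_shift n L r c : L <= r -> SB n (r - L) c = SB n r (L * (n + 2) + c).
Proof.
move=> Lr; rewrite /shiftbin_entry /= divnMDl ?addn_gt0 ?orbT // modnMDl.
set j := c %/ (n + 2).
have -> : (L + j <= r) = (j <= r - L) by lia.
have -> : (r < L + j + 2 ^ n) = (r - L < j + 2 ^ n) by lia.
by have -> : r - (L + j) = r - L - j by lia.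
Qed.

Lemma sb_low n r c : r < c %/ (n + 2) -> SB n r c = c0.
Proof. by move=> H; rewrite /shiftbin_entry /= leqNgt H. Qed.

Lemma sb_high n r c : c %/ (n + 2) + 2 ^ n <= r -> SB n r c = c0.
Proof. by move=> H; rewrite /shiftbin_entry /= [r < _]ltnNge H andbF. Qed.

Lemma Yloop g n t jY jZ : slp_wf g ->
  gen g jY (2 ^ n + 1) (n + 2) (SB n) -> gen g jZ 1 (n + 2) (fun _ _ => c0) ->
  builds g (6 * t) (fun g' => exists jY' jZ',
    gen g' jY' (2 ^ n + 2 ^ t) (2 ^ t * (n + 2)) (SB n) /\
    gen g' jZ' (2 ^ t) (2 ^ t * (n + 2)) (fun _ _ => c0)).
Proof.
move=> wf GY GZ; elim: t => [|t IH].
  by apply: (builds_retK _ wf); exists jY, jZ; rewrite expn0 mul1n.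
have -> : 6 * t.+1 = 6 * t + (1 + (1 + (1 + (1 + (1 + 1))))) by lia.
apply: (builds_bind IH) => s wf1 [y [z [Y Z]]].
set L := 2 ^ t; set W1 := L * (n + 2).
apply: (builds_bind (step_hcat wf1 Z Z)) => s2 wf2 [z1 Z1].
apply: (builds_bind (step_vcat wf2 Z1 Z1)) => s3 wf3 [z2 Z2].
have Y3 : gen (((g ++ s) ++ s2) ++ s3) y (2 ^ n + L) W1 (SB n) by lift.
have Z3 : gen (((g ++ s) ++ s2) ++ s3) z L W1 (fun _ _ => c0) by lift.
apply: (builds_bind (step_vcat wf3 Y3 Z3)) => s4 wf4 [a A].
have Y4 : gen ((((g ++ s) ++ s2) ++ s3) ++ s4) y (2 ^ n + L) W1 (SB n) by lift.
have Z4 : gen ((((g ++ s) ++ s2) ++ s3) ++ s4) z L W1 (fun _ _ => c0) by lift.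
apply: (builds_bind (step_vcat wf4 Z4 Y4)) => s5 wf5 [b B].
have A5' : gen (((((g ++ s) ++ s2) ++ s3) ++ s4) ++ s5) a (2 ^ n + L + L) W1
  (vfun (2 ^ n + L) (SB n) (fun _ _ => c0)) by lift.
have A5 : gen (((((g ++ s) ++ s2) ++ s3) ++ s4) ++ s5) a (L + (2 ^ n + L)) W1
  (vfun (2 ^ n + L) (SB n) (fun _ _ => c0)) by apply: gen_hw A5' _ erefl; lia.
apply: (builds_bind (step_hcat wf5 A5 B)) => s6 wf6 [e E].
apply: (builds_retK _ wf6); exists e, z2; split.
  have E' := gen_hw E (h' := 2 ^ n + 2 ^ t.+1) (w' := 2 ^ t.+1 * (n + 2))
    ltac:(by rewrite expnS mul2n -addnn /L; lia)
    ltac:(by rewrite /W1 /L expnS mul2n -addnn mulnDl).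
  apply: gen_fun E' => r c rh cw; rewrite /hfun /vfun.
  case: ifP => cW.
    case: ifP => // rY; apply/esym/sb_high.
    move/negbT: rY; rewrite -leqNgt => rY.
    have : c %/ (n + 2) < L by rewrite ltn_divLR ?addn_gt0 ?orbT.
    lia.
  move/negbT: cW; rewrite -leqNgt => cW.
  have Lc : L <= c %/ (n + 2) by rewrite leq_divRL ?addn_gt0 ?orbT.
  case: ifP => rL; first by apply/esym/sb_low; lia.
  rewrite sb_shift; last by lia.
  by rewrite subnKC.
have Z2' := gen_cst Z2 (a := c0) (fun r c => ltac:(by rewrite /vfun /hfun; do ! case: ifP)).
have Z6 : gen ((((((g ++ s) ++ s2) ++ s3) ++ s4) ++ s5) ++ s6) z2 (2 ^ t + 2 ^ t)
      (2 ^ t * (n + 2) + 2 ^ t * (n + 2)) (fun=> (fun=> c0)) by lift.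
apply: gen_hw Z6 _ _; first by rewrite expnS mul2n -addnn.
by rewrite expnS mul2n -addnn mulnDl.
Qed.


Lemma build_SB g n : slp_wf g ->
  builds g (12 * n + 6 + 2 * trunc_log 2 (n + 2))
    (fun g' => exists j, gen g' j (2 ^ n + 2 ^ n) (2 ^ n * (n + 2)) (SB n)).
Proof.
move=> wf.
have -> : 12 * n + 6 + 2 * trunc_log 2 (n + 2) =
  (6 * n + 3) + (1 + ((1 + 2 * trunc_log 2 (n + 2) + 2 * trunc_log 2 1) + (1 + 6 * n))).
  by rewrite trunc_log1; lia.
apply: (@builds_bind _ (6 * n + 3) _ _ _ (build_D n wf)) => s wf1 [j0 [j1 [jd [jD [_ _ Gd GD]]]]].
apply: (builds_bind (step_hcat wf1 Gd GD)) => s2 wf2 [jb Bn].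
apply: (builds_bind (const_blk c0 1 (n + 2) wf2)) => s3 wf3 [jz Z].
have Z' : gen ((((g ++ s) ++ s2) ++ s3)) jz 1 (n + 2) (fun _ _ => c0).
  by apply: (gen0_gen _ _ Z); rewrite ?addn_gt0 ?orbT.
have B3 : gen (((g ++ s) ++ s2) ++ s3) jb (2 ^ n) (1 + n.+1)
  (hfun 1 (fun=> (fun=> cd)) (fun r c : nat => bin_entry c0 c1 cd n r c.+1)) by lift.
have B3' := gen_hw B3 (erefl _) (ltac:(by rewrite add1n addn2) : 1 + n.+1 = n + 2).
apply: (builds_bind (step_vcat wf3 B3' Z')) => s4 wf4 [jy Y].
have Z4 : gen ((((g ++ s) ++ s2) ++ s3) ++ s4) jz 1 (n + 2) (fun _ _ => c0) by lift.
have Y' : gen ((((g ++ s) ++ s2) ++ s3) ++ s4) jy (2 ^ n + 1) (n + 2) (SB n).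
  apply: gen_fun Y => r c rh cw.
  rewrite /vfun /hfun /shiftbin_entry /= divn_small // modn_small // add0n subn0.
  case: ifP => // rn.
  case: ifP => c1'.
    by have -> : c = 0 by lia.
  by case: c c1' cw => [|c] //= _ _; rewrite subn1.
apply: builds_wk (Yloop n wf4 Y' Z4) => s5 [jy' [_ [G _]]].
by exists jy'.
Qed.


Definition SBp n r c := SB n (r %% (2 * 2 ^ n)) c.

Lemma Cstr_mat H M : Cstr c0 c1 cd H M = mat H M (C_entry c0 c1 cd H M).
Proof. by []. Qed.

Lemma assemble g n M H q q' rho rho' bl br zc zr zr' zp :
  slp_wf g -> logMp M = n -> 2 * (2 ^ n * (n + 2)) <= M ->
  H = q * (2 * 2 ^ n) + rho -> rho < 2 * 2 ^ n -> 2 ^ n <= H ->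
  H - 2 ^ n = q' * (2 * 2 ^ n) + rho' -> rho' < 2 * 2 ^ n ->
  gen0 g bl (q * (2 * 2 ^ n)) (2 ^ n * (n + 2)) (SBp n) ->
  gen0 g zr rho (2 ^ n * (n + 2)) (fun _ _ => c0) ->
  gen0 g br (q' * (2 * 2 ^ n)) (2 ^ n * (n + 2)) (SBp n) ->
  gen0 g zr' rho' (2 ^ n * (n + 2)) (fun _ _ => c0) ->
  gen0 g zp (2 ^ n) (2 ^ n * (n + 2)) (fun _ _ => c0) ->
  gen0 g zc H (M - 2 ^ n * (n + 2) - 2 ^ n * (n + 2)) (fun _ _ => c0) ->
  builds g 5 (fun g' => exists j, j < size g' /\ expNT g' j = Cstr c0 c1 cd H M).
Proof.
move=> wf ln WM eH rhoP PH eH' rho'P BL ZR BR ZR' ZP ZC.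
set P := 2 ^ n in WM eH rhoP PH eH' rho'P BL ZR BR ZR' ZP ZC *.
set W := P * (n + 2) in WM BL ZR BR ZR' ZP ZC *.
set P2 := 2 * P in eH rhoP eH' rho'P BL BR *.
have P2p : 0 < P2 by rewrite /P2 /P muln_gt0 expn_gt0.
have Pp : 0 < P by rewrite /P expn_gt0.
have -> : 5 = 1 + (1 + (1 + (1 + 1))) by [].
apply: (builds_bind (step_vcat0 wf BL ZR)) => s1 wf1 [l L].
have BR1 : gen0 (g ++ s1) br (q' * P2) W (SBp n) by lift.
have ZR1 : gen0 (g ++ s1) zr' rho' W (fun _ _ => c0) by lift.
apply: (builds_bind (step_vcat0 wf1 BR1 ZR1)) => s2 wf2 [ri Ri].
have ZP2 : gen0 ((g ++ s1) ++ s2) zp P W (fun _ _ => c0) by lift.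
apply: (builds_bind (step_vcat0 wf2 ZP2 Ri)) => s3 wf3 [rr R].
have L1 : gen0 (((g ++ s1) ++ s2) ++ s3) l (q * P2 + rho) W
  (vfun (q * P2) (SBp n) (fun _ _ => c0)) by lift.
have L3 : gen0 (((g ++ s1) ++ s2) ++ s3) l H W
  (vfun (q * P2) (SBp n) (fun _ _ => c0)) by apply: gen0_hw L1 _ (erefl _); lia.
have R3 : gen0 (((g ++ s1) ++ s2) ++ s3) rr H W
  (vfun P (fun _ _ => c0) (vfun (q' * P2) (SBp n) (fun _ _ => c0))).
  by apply: gen0_hw R _ (erefl _); lia.
apply: (builds_bind (step_hcat0 wf3 L3 R3)) => s4 wf4 [lr LR].
have ZC4 : gen0 ((((g ++ s1) ++ s2) ++ s3) ++ s4) zc H (M - W - W) (fun _ _ => c0) by lift.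
apply: builds_wk (step_hcat0 wf4 LR ZC4) => s5 [j G].
have Hp : 0 < H by lia.
have Mp : 0 < M by lia.
have G' := gen0_gen Hp Mp (gen0_hw G (erefl _) (ltac:(lia) : W + W + (M - W - W) = M)).
case: G' => [jl _ _ E]; exists j; split => //.
rewrite E Cstr_mat; apply: mat_ext => r c rH cM.
rewrite /hfun /vfun /C_entry /= ln -/P -/W -/P2.
have eq1 : H %/ P2 = q by rewrite eH divnMDl // divn_small // addn0.
have eq2 : (H - P) %/ P2 = q' by rewrite eH' divnMDl // divn_small // addn0.
rewrite eq1 eq2 ltn_divLR // ltn_divLR //.
have -> : 2 * W = W + W by rewrite mul2n addnn.
case: ifP => cWW; last by case: ifP => // cW; lia.
case: ifP => cW //.
Qed.


Lemma grow_rep g n x y q beta w : slp_wf g ->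
  gen0 g x (q * (2 * 2 ^ n)) w (SBp n) -> gen0 g y (beta * (2 * 2 ^ n)) w (SBp n) ->
  builds g 1 (fun g' => exists j, gen0 g' j ((q + beta) * (2 * 2 ^ n)) w (SBp n)).
Proof.
move=> wf X Y; apply: builds_wk (step_vcat0 wf X Y) => s [j G]; exists j.
apply: gen0_hw (gen0_fun _ G) _ (erefl _); last by rewrite mulnDl.
move=> r c _ _; rewrite /vfun; case: ifP => // rq.
move/negbT: rq; rewrite -leqNgt => rq.
by rewrite /SBp modn_sub.
Qed.

Lemma grow_const g x y h1 h2 w (a : S) : slp_wf g ->
  gen0 g x h1 w (fun _ _ => a) -> gen0 g y h2 w (fun _ _ => a) ->
  builds g 1 (fun g' => exists j, gen0 g' j (h1 + h2) w (fun _ _ => a)).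
Proof.
move=> wf X Y; apply: builds_wk (step_vcat0 wf X Y) => s [j G]; exists j.
by apply: gen0_fun G => r c _ _; rewrite /vfun; case: ifP.
Qed.

Definition res (g : slp S) H M := exists j, j < size g /\ expNT g j = Cstr c0 c1 cd H M.

Lemma res_cat g s H M : res g H M -> res (g ++ s) H M.
Proof.
by case=> j [lt E]; exists j; rewrite size_cat ltn_addr // expNT_cat.
Qed.

Lemma prog_loop g n M H0 beta q0 q0' rho rho' K bl br zc zr zr' zp bb zd :
  slp_wf g -> logMp M = n -> 2 * (2 ^ n * (n + 2)) <= M ->
  H0 = q0 * (2 * 2 ^ n) + rho -> rho < 2 * 2 ^ n -> 2 ^ n <= H0 ->
  H0 - 2 ^ n = q0' * (2 * 2 ^ n) + rho' -> rho' < 2 * 2 ^ n ->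
  gen0 g bl (q0 * (2 * 2 ^ n)) (2 ^ n * (n + 2)) (SBp n) ->
  gen0 g zr rho (2 ^ n * (n + 2)) (fun _ _ => c0) ->
  gen0 g br (q0' * (2 * 2 ^ n)) (2 ^ n * (n + 2)) (SBp n) ->
  gen0 g zr' rho' (2 ^ n * (n + 2)) (fun _ _ => c0) ->
  gen0 g zp (2 ^ n) (2 ^ n * (n + 2)) (fun _ _ => c0) ->
  gen0 g zc H0 (M - 2 ^ n * (n + 2) - 2 ^ n * (n + 2)) (fun _ _ => c0) ->
  gen0 g bb (beta * (2 * 2 ^ n)) (2 ^ n * (n + 2)) (SBp n) ->
  gen0 g zd (beta * (2 * 2 ^ n)) (M - 2 ^ n * (n + 2) - 2 ^ n * (n + 2)) (fun _ _ => c0) ->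
  builds g (8 * K + 5) (fun g' => exists bl' br' zc',
    [/\ gen0 g' bl' ((q0 + K * beta) * (2 * 2 ^ n)) (2 ^ n * (n + 2)) (SBp n),
        gen0 g' br' ((q0' + K * beta) * (2 * 2 ^ n)) (2 ^ n * (n + 2)) (SBp n),
        gen0 g' zc' (H0 + K * (beta * (2 * 2 ^ n))) (M - 2 ^ n * (n + 2) - 2 ^ n * (n + 2)) (fun _ _ => c0),
        gen0 g' zr rho (2 ^ n * (n + 2)) (fun _ _ => c0) &
        [/\ gen0 g' zr' rho' (2 ^ n * (n + 2)) (fun _ _ => c0),
        gen0 g' zp (2 ^ n) (2 ^ n * (n + 2)) (fun _ _ => c0),
        gen0 g' bb (beta * (2 * 2 ^ n)) (2 ^ n * (n + 2)) (SBp n),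
        gen0 g' zd (beta * (2 * 2 ^ n)) (M - 2 ^ n * (n + 2) - 2 ^ n * (n + 2)) (fun _ _ => c0) &
        forall u, u <= K -> res g' (H0 + u * (beta * (2 * 2 ^ n))) M]]).
Proof.
move=> wf ln WM eH rhoP PH eH' rho'P BL ZR BR ZR' ZP ZC BB ZD.
elim: K => [|K IH].
  rewrite muln0 addn0.
  apply: builds_wk (assemble wf ln WM eH rhoP PH eH' rho'P BL ZR BR ZR' ZP ZC) => s R.
  exists bl, br, zc; rewrite ?muln0 ?mul0n ?addn0; split; try lift.
  split; try lift.
  by move=> u; rewrite leqn0 => /eqP->; rewrite mul0n addn0.
have -> : 8 * K.+1 + 5 = (8 * K + 5) + (1 + (1 + (1 + 5))) by lia.
apply: (builds_bind IH) => s wf1 [bl1 [br1 [zc1 [BL1 BR1 ZC1 ZR1 [ZR'1 ZP1 BB1 ZD1 RS]]]]].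
apply: (builds_bind (grow_rep wf1 BL1 BB1)) => s2 wf2 [bl2 BL2].
have BR2 : gen0 ((g ++ s) ++ s2) br1 ((q0' + K * beta) * (2 * 2 ^ n)) (2 ^ n * (n + 2)) (SBp n) by lift.
have BB2 : gen0 ((g ++ s) ++ s2) bb (beta * (2 * 2 ^ n)) (2 ^ n * (n + 2)) (SBp n) by lift.
apply: (builds_bind (grow_rep wf2 BR2 BB2)) => s3 wf3 [br3 BR3].
have ZC3 : gen0 (((g ++ s) ++ s2) ++ s3) zc1 (H0 + K * (beta * (2 * 2 ^ n))) (M - 2 ^ n * (n + 2) - 2 ^ n * (n + 2)) (fun _ _ => c0) by lift.
have ZD3 : gen0 (((g ++ s) ++ s2) ++ s3) zd (beta * (2 * 2 ^ n)) (M - 2 ^ n * (n + 2) - 2 ^ n * (n + 2)) (fun _ _ => c0) by lift.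
apply: (builds_bind (grow_const wf3 ZC3 ZD3)) => s4 wf4 [zc4 ZC4].
set g4 := (((g ++ s) ++ s2) ++ s3) ++ s4.
set P2 := 2 * 2 ^ n in eH rhoP eH' rho'P BL1 BR1 ZC1 ZR1 ZR'1 BB1 ZD1 RS BL2 BR3 ZC4 *.
have eK : (K.+1 * beta) = K * beta + beta by rewrite mulSn addnC.
have BL4 : gen0 g4 bl2 ((q0 + K.+1 * beta) * P2) (2 ^ n * (n + 2)) (SBp n).
  by rewrite eK addnA; lift.
have BR4 : gen0 g4 br3 ((q0' + K.+1 * beta) * P2) (2 ^ n * (n + 2)) (SBp n).
  by rewrite eK addnA; lift.
have ZC4' : gen0 g4 zc4 (H0 + K.+1 * (beta * P2)) (M - 2 ^ n * (n + 2) - 2 ^ n * (n + 2)) (fun _ _ => c0).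
  by rewrite mulSn (addnC (beta * P2)) addnA.
have ZR4 : gen0 g4 zr rho (2 ^ n * (n + 2)) (fun _ _ => c0) by lift.
have ZR'4 : gen0 g4 zr' rho' (2 ^ n * (n + 2)) (fun _ _ => c0) by lift.
have ZP4 : gen0 g4 zp (2 ^ n) (2 ^ n * (n + 2)) (fun _ _ => c0) by lift.
have wf4' : slp_wf g4 by [].
have eH4 : H0 + K.+1 * (beta * P2) = (q0 + K.+1 * beta) * P2 + rho.
  by rewrite eH mulnDl -mulnA; lia.
have eH4' : H0 + K.+1 * (beta * P2) - 2 ^ n = (q0' + K.+1 * beta) * P2 + rho'.
  by rewrite mulnDl -mulnA; lia.
apply: builds_wk (assemble wf4' ln WM eH4 rhoP (ltac:(lia)) eH4' rho'P BL4 ZR4 BR4 ZR'4 ZP4 ZC4') => s5 R5.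
exists bl2, br3, zc4; split; try lift.
split; try lift.
move=> u; rewrite leq_eqVlt => /orP[/eqP->|]; first by [].
by rewrite ltnS => uK; rewrite /g4; do 4 apply: res_cat; apply: RS.
Qed.


Lemma vrep0 g x h w f m : slp_wf g -> gen g x h w f ->
  builds g (2 * trunc_log 2 m) (fun g' => exists j, gen0 g' j (m * h) w (fun r c => f (r %% h) c)).
Proof.
move=> wf G; have [->|mp] := posnP m.
  by apply: (builds_retK _ wf); exists 0; left; left.
by apply: builds_wk (vrep wf G mp) => s [j J]; exists j; right.
Qed.

Lemma prog g n M H0 beta K X jB : slp_wf g -> logMp M = n -> 2 * (2 ^ n * (n + 2)) <= M ->
  2 ^ n <= H0 -> H0 <= X -> beta * (2 * 2 ^ n) <= X ->
  gen g jB (2 * 2 ^ n) (2 ^ n * (n + 2)) (SB n) ->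
  builds g (16 * trunc_log 2 X + 10 * trunc_log 2 M + 8 * K + 10)
    (fun g' => forall u, u <= K -> res g' (H0 + u * (beta * (2 * 2 ^ n))) M).
Proof.
move=> wf ln WM PH H0X bX GB.
set P := 2 ^ n in WM PH bX GB *.
set W := P * (n + 2) in WM GB *.
set P2 := 2 * P in bX GB *.
have P2p : 0 < P2 by rewrite /P2 /P muln_gt0 expn_gt0.
set q0 := H0 %/ P2; set rho := H0 %% P2.
set q0' := (H0 - P) %/ P2; set rho' := (H0 - P) %% P2.
set Z := M - W - W.
set tl := trunc_log 2.
have Hb : builds g (2 * tl q0 + (2 * tl q0' + (2 * tl beta + ((1 + 2 * tl W + 2 * tl rho) +
   ((1 + 2 * tl W + 2 * tl rho') + ((1 + 2 * tl W + 2 * tl P) + ((1 + 2 * tl Z + 2 * tl H0)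
   + ((1 + 2 * tl Z + 2 * tl (beta * P2)) + (8 * K + 5)))))))))
    (fun g' => forall u, u <= K -> res g' (H0 + u * (beta * P2)) M).
  apply: (builds_bind (vrep0 q0 wf GB)) => s1 wf1 [bl BL].
  have GB1 : gen (g ++ s1) jB P2 W (SB n) by lift.
  apply: (builds_bind (vrep0 q0' wf1 GB1)) => s2 wf2 [br BR].
  have GB2 : gen ((g ++ s1) ++ s2) jB P2 W (SB n) by lift.
  apply: (builds_bind (vrep0 beta wf2 GB2)) => s3 wf3 [bb BB].
  apply: (builds_bind (const_blk c0 rho W wf3)) => s4 wf4 [zr ZR].
  apply: (builds_bind (const_blk c0 rho' W wf4)) => s5 wf5 [zr' ZR'].
  apply: (builds_bind (const_blk c0 P W wf5)) => s6 wf6 [zp ZP].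
  apply: (builds_bind (const_blk c0 H0 Z wf6)) => s7 wf7 [zc ZC].
  apply: (builds_bind (const_blk c0 (beta * P2) Z wf7)) => s8 wf8 [zd ZD].
  set g8 := ((((((((g ++ s1) ++ s2) ++ s3) ++ s4) ++ s5) ++ s6) ++ s7) ++ s8).
  have BL8 : gen0 g8 bl (q0 * P2) W (SBp n) by lift.
  have BR8 : gen0 g8 br (q0' * P2) W (SBp n) by lift.
  have BB8 : gen0 g8 bb (beta * P2) W (SBp n) by lift.
  have ZR8 : gen0 g8 zr rho W (fun _ _ => c0) by lift.
  have ZR'8 : gen0 g8 zr' rho' W (fun _ _ => c0) by lift.
  have ZP8 : gen0 g8 zp P W (fun _ _ => c0) by lift.
  have ZC8 : gen0 g8 zc H0 Z (fun _ _ => c0) by lift.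
  have wf8' : slp_wf g8 by [].
  have eH : H0 = q0 * P2 + rho by rewrite /q0 /rho -divn_eq.
  have eH' : H0 - P = q0' * P2 + rho' by rewrite /q0' /rho' -divn_eq.
  have rhoP : rho < P2 by rewrite /rho ltn_mod.
  have rho'P : rho' < P2 by rewrite /rho' ltn_mod.
  apply: builds_wk (prog_loop K wf8' ln WM eH rhoP PH eH' rho'P BL8 ZR8 BR8 ZR'8 ZP8 ZC8 BB8 ZD)
    => s9 [bl' [br' [zc' [_ _ _ _ [_ _ _ _ RS]]]]].
  exact: RS.
apply: builds_mono Hb.
have lM : forall y, y <= M -> tl y <= tl M by move=> y; apply: leq_trunc_log.
have lX : forall y, y <= X -> tl y <= tl X by move=> y; apply: leq_trunc_log.
have WMM : W <= M by lia.
have ZM : Z <= M by rewrite /Z; lia.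
have PX : P <= X by lia.
have bP2 : beta <= beta * P2 by rewrite leq_pmulr.
have h1 := lX q0 ltac:(rewrite /q0; apply: leq_trans (leq_div _ _) H0X).
have HPX : H0 - P <= X by apply: leq_trans (leq_subr _ _) H0X.
have h2 := lX q0' ltac:(rewrite /q0'; apply: leq_trans (leq_div _ _) HPX).
have h3 := lX beta (leq_trans bP2 bX).
have h4 := lX rho ltac:(rewrite /rho; apply: leq_trans (leq_mod _ _) H0X).
have h5 := lX rho' ltac:(rewrite /rho'; apply: leq_trans (leq_mod _ _) HPX).
have h6 := lX P PX.
have h7 := lX H0 H0X.
have h8 := lX (beta * P2) bX.
have h9 := lM W WMM.
have h10 := lM Z ZM.
lia.
Qed.

End SLP.

Unset Implicit Arguments.

Ltac lift := solve [ assumption | apply: gen_cat; lift | apply: gen0_cat; lift ].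

Lemma INR_expn t : INR (2 ^ t) = Rpow_def.pow (INR 2) t.
Proof.
elim: t => [|t IH] //.
by rewrite expnS mult_INR IH.
Qed.

Lemma log2R_ge t x : (2 ^ t <= x)%N -> Rle (INR t) (log2R x).
Proof.
move=> H; rewrite /log2R.
have l2 : Rlt 0 (ln (INR 2)) by rewrite -ln_1; apply: ln_increasing; simpl; lra.
apply: (Rmult_le_reg_r (ln (INR 2))) => //.
rewrite /Rdiv Rmult_assoc Rinv_l; last by apply: Rgt_not_eq.
rewrite Rmult_1_r -ln_pow; last by simpl; lra.
rewrite -INR_expn.
have p0 : Rlt 0 (INR (2 ^ t)) by apply: lt_0_INR; apply/ltP; rewrite expn_gt0.
have := le_INR _ _ (elimT leP H) => /Rle_lt_or_eq_dec [lt|->].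
  by apply: Rlt_le; apply: ln_increasing.
exact: Rle_refl.
Qed.

Lemma foldl_inv M (s : seq nat) acc : (2 * 2 ^ acc * (acc + 2) <= M)%N ->
  (2 * 2 ^ (foldl (fun acc n => if (2 * 2 ^ n * (n + 2) <= M)%N then n else acc) acc s)
    * (foldl (fun acc n => if (2 * 2 ^ n * (n + 2) <= M)%N then n else acc) acc s + 2) <= M)%N.
Proof.
elim: s acc => [|a s IH] acc Hacc //=.
apply: IH; by case: ifP.
Qed.

Lemma logMp_ok M : (4 <= M)%N -> (2 * (2 ^ logMp M * (logMp M + 2)) <= M)%N.
Proof. by move=> M4; rewrite mulnA; apply: foldl_inv. Qed.


Theorem mainTheorem9 :
  exists c : R, Rlt 0 c /\
  forall (S : Type) (c0 c1 cd : S) (N M b k : nat),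
    (1 <= N)%N -> (4 <= M)%N ->
    (2 ^ logMp M <= N)%N ->
    (0 < b)%N -> (b <= N)%N -> (2 ^ logMp M %| b)%N ->
    exists g : slp S,
      slp_wf g /\
      Rle (INR (slp_size g)) (Rmult c (Rplus (Rplus (log2R N) (log2R M)) (INR k))) /\
      forall i : nat, (i <= k)%N ->
        exists j : nat, (j < slp_size g)%N /\
          expNT g j = Cstr c0 c1 cd (N + i * b) M.
Proof.
exists (INR 100); split; first by apply: lt_0_INR; apply/ltP.
move=> S c0 c1 cd N M b k N1 M4 PN b0 bN Pb.
have WM := logMp_ok M M4.
set n := logMp M in PN Pb WM.
set P := 2 ^ n in PN Pb WM.
set beta := b %/ P.
have eb : b = beta * P by rewrite /beta divnK.
have Pp : (0 < P)%N by rewrite /P expn_gt0.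
have e2b : (beta * (2 * P) = b + b)%N by rewrite mulnCA -eb mul2n addnn.
set tl := trunc_log 2.
have wf0 : slp_wf ([::] : slp S) by [].
have Hb : builds ([::] : slp S)
  ((12 * n + 6 + 2 * tl (n + 2)) + ((16 * tl (N + N) + 10 * tl M + 8 * k + 10) +
   (16 * tl (N + N) + 10 * tl M + 8 * k + 10)))
  (fun g' => forall i, (i <= k)%N -> res c0 c1 cd g' (N + i * b) M).
  apply: (builds_bind (build_SB c0 c1 cd n wf0)) => s1 wf1 [jB GB].
  have GB' : gen (([::] : slp S) ++ s1) jB (2 * 2 ^ n) (2 ^ n * (n + 2)) (shiftbin_entry c0 c1 cd n).
    by apply: gen_hw GB _ (erefl _); rewrite mul2n addnn.
  have ln : logMp M = n by [].
  have P1 : (N <= N + N)%N by rewrite leq_addr.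
  have P2 : (beta * (2 * 2 ^ n) <= N + N)%N by rewrite e2b leq_add.
  apply: (builds_bind (prog k wf1 ln WM PN P1 P2 GB')) => s2 wf2 R1.
  have GB2 : gen ((([::] : slp S) ++ s1) ++ s2) jB (2 * 2 ^ n) (2 ^ n * (n + 2)) (shiftbin_entry c0 c1 cd n) by lift.
  have PN' : (2 ^ n <= N + b)%N by apply: leq_trans PN (leq_addr _ _).
  have P1' : (N + b <= N + N)%N by rewrite leq_add2l.
  apply: builds_wk (prog k wf2 ln WM PN' P1' P2 GB2) => s3 R2.
  move=> i ik.
  have ei : i = odd i + (i./2 + i./2) by rewrite addnn odd_double_half.
  have uk : (i./2 <= k)%N by apply: leq_trans ik; rewrite -{2}(odd_double_half i) -addnn; lia.
  case: (odd i) ei => ei.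
    have -> : (N + i * b = N + b + i./2 * (beta * (2 * 2 ^ n)))%N.
      by rewrite (e2b : beta * (2 * 2 ^ n) = b + b) {1}ei /= !mulnDl mulnDr mul1n; lia.
    exact: R2.
  have -> : (N + i * b = N + i./2 * (beta * (2 * 2 ^ n)))%N.
    by rewrite (e2b : beta * (2 * 2 ^ n) = b + b) {1}ei /= !mulnDl mulnDr.
  by apply: res_cat; apply: R1.
have [s [wfs sz R]] := Hb.
exists s; split => //; split.
  have PnM : (P <= P * (n + 2))%N by rewrite leq_pmulr // addn_gt0 orbT.
  have n2M : (n + 2 <= P * (n + 2))%N by rewrite leq_pmull.
  have PM : (2 ^ n <= M)%N by rewrite -/P; lia.
  have hn : (n <= tl M)%N by apply: trunc_log_max.
  have hn2 : (tl (n + 2) <= tl M)%N by apply: leq_trunc_log; lia.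
  have hNN : tl (N + N) = (tl N).+1 by rewrite /tl addnn trunc_log2_double.
  have hM2 : (2 <= tl M)%N by apply: trunc_log_max => //; lia.
  have nb : (size s <= 100 * (tl N + tl M + k))%N by rewrite hNN in sz; lia.
  rewrite /slp_size.
  apply: (Rle_trans _ (INR (100 * (tl N + tl M + k)))); first by apply: le_INR; apply/leP.
  rewrite mult_INR !plus_INR.
  apply: Rmult_le_compat_l; first exact: pos_INR.
  apply: Rplus_le_compat; last exact: Rle_refl.
  apply: Rplus_le_compat; apply: log2R_ge; apply: trunc_logP => //; lia.
move=> i ik; have [j [jl E]] := R i ik.
by exists j.
Qed.
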